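(* For every integer $d \geq 2$, the morphism $(\mathbb{C}^* )^2 \to \mathbb{C}^3$, $(x,y) \mapsto (x^{-1} + d y^{-1},\ x + dy,\ x^2 + dy^2)$ is injective. *)

(* Defs.v *)
(* complex numbers as R[i] = complex R over a realType R
   (taking R to be the real numbers gives C). *)
From HB Require Import structures.
From mathcomp Require Import all_boot all_order all_algebra.
From mathcomp Require Import complex.
From mathcomp Require Import reals.
Set Implicit Arguments. Unset Strict Implicit. Unset Printing Implicit Defensive.
Import Order.TTheory GRing.Theory Num.Theory.
Local Open Scope ring_scope.

Definition phi4 (R : realType) (d : nat) (p : R[i] * R[i]) : R[i] * R[i] * R[i] :=
  (p.1^-1 + d%:R * p.2^-1, p.1 + d%:R * p.2, p.1 ^+ 2 + d%:R * p.2 ^+ 2).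

Definition torus2 (R : realType) : pred (R[i] * R[i]) :=
  fun p => (p.1 != 0) && (p.2 != 0).

(* Main.v *)
Require Import Defs.
From HB Require Import structures.
From mathcomp Require Import all_boot all_order all_algebra.
From mathcomp Require Import complex.
From mathcomp Require Import reals.
From mathcomp Require Import ring.
Local Open Scope ring_scope.
Import GRing.Theory Num.Theory.

Theorem lemma4p4 (R : realType) (d : nat) (hd : (2 <= d)%N) :
  {in @torus2 R &, injective (@phi4 R d)}.
Proof.
move=> [x y] [x' y'] /andP[/= hx hy] /andP[/= hx' hy'].
rewrite /phi4 /= => -[ha hb hc].
set D : R[i] := d%:R in ha hb hc *.
have hD1 : D + 1 != 0.
  by rewrite /D natr1 pnatr_eq0.
have hDm : D - 1 != 0.
  by rewrite /D -[1]/(1%:R) -natrB ?pnatr_eq0 ?subn_eq0 -?ltnNge //; apply: leq_trans hd.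
have hD : D != 0 by rewrite /D pnatr_eq0 -lt0n; apply: leq_trans hd.
have [eyy|nyy] := eqVneq y y'.
  by subst y'; move/addIr: hb => ->.
exfalso.
have hv : y - y' != 0 by rewrite subr_eq0.
have es : x + x' = y + y'.
  have e : D * (y - y') * ((y + y') - (x + x')) =
     (x ^+ 2 + D * y ^+ 2 - (x' ^+ 2 + D * y' ^+ 2))
     - ((x + D * y) - (x' + D * y')) * (x + x') by ring.
  move: e; rewrite hb hc !subrr mul0r subrr => /eqP.
  rewrite !mulf_eq0 (negbTE hD) (negbTE hv) /= subr_eq0 => /eqP.
  by move->.
have ep : x * x' = y * y'.
  have e : D * (y - y') * (y * y' - x * x') =
     x * x' * y * y' * ((x^-1 + D * y^-1) - (x'^-1 + D * y'^-1))
     + y * y' * ((x + D * y) - (x' + D * y')).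
    by field; rewrite ?hx ?hx' ?hy ?hy'.
  move: e; rewrite ha hb !subrr !mulr0 addr0 => /eqP.
  rewrite !mulf_eq0 (negbTE hD) (negbTE hv) /= subr_eq0 => /eqP.
  by move->.
have : (x - y) * (x - y') == 0.
  have -> : (x - y) * (x - y') = x ^+ 2 - x * (y + y') + y * y' by ring.
  by rewrite -es -ep; apply/eqP; ring.
rewrite mulf_eq0 !subr_eq0 => /orP[] /eqP exy.
  subst x.
  have ex' : x' = y' by apply: (addrI y).
  subst x'.
  have e : (D + 1) * (y - y') = (y + D * y) - (y' + D * y') by ring.
  by move: e; rewrite hb subrr => /eqP; rewrite mulf_eq0 (negbTE hD1) (negbTE hv).
subst x.
have ex' : x' = y by apply: (addrI y'); rewrite es addrC.
subst x'.
have e : (D - 1) * (y - y') = (y' + D * y) - (y + D * y') by ring.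
by move: e; rewrite hb subrr => /eqP; rewrite mulf_eq0 (negbTE hDm) (negbTE hv).
Qed.
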